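(* Let $n\ge 4$, distances $d_{ij}>0$, $e_{ij}=\tan^{-1}(d_{ij})$, and fix $\beta$ with $\sin(\pi\beta)\neq 0$. Fix a state $(s,d,e,t)$ and two distinct unexplored nodes $a,b\neq t$, and let $\gamma^\#>0$ satisfy $\cos(\gamma^\# e_{ab})=0$. For $c\in\{a,b\}$ define $$g_c(\gamma)=d_{tc}\sin(\pi\beta)\sin(\gamma e_{tc})\prod_{k\in\{1,\dots,n\}\setminus\{t,a,b\}}\cos(\gamma e_{ck}),$$ so that $Q((s,d,e,t),c;(\gamma,\beta))=\cos(\gamma e_{ab})\,g_c(\gamma)$. Assume $g_a(\gamma^\#)\neq g_b(\gamma^\#)$. Then there exists $\delta>0$ such that for every $\varepsilon\in(0,\delta)$: (i) the relative order of the Q-values of $a$ and $b$ inverts across $\gamma^\#$: $\operatorname{sign}\big(Q(\cdot,a;(\gamma^\#-\varepsilon,\beta))-Q(\cdot,b;(\gamma^\#-\varepsilon,\beta))\big)=-\operatorname{sign}\big(Q(\cdot,a;(\gamma^\#+\varepsilon,\beta))-Q(\cdot,b;(\gamma^\#+\varepsilon,\beta))\big)\neq 0$; (ii) if $a$ (resp. $b$) is a maximizer of the Q-values over unexplored nodes at $\gamma^\#-\varepsilon$ (or at $\gamma^\#+\varepsilon$), then it is not a maximizer at the other parameter value $\gamma^\#\pm\varepsilon$; in particular the greedy policy is policy critical at $\gamma^\#$, i.e. $\pi((s,d,e,t);(\gamma^\#-\varepsilon,\beta))\neq\pi((s,d,e,t);(\gamma^\#+\varepsilon,\beta))$.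
   Context: TSP instance: $n$ nodes, $d_{ij}=d_{ji}>0$ is the Euclidean distance between nodes $i\neq j$, and scaled edge weights $e_{ij}=\tan^{-1}(d_{ij})$. A state is a tuple $(s,d,e,t)$ with $s\in\{0,\pi\}^n$, $s_i=\pi$ iff node $i$ is unvisited, and $t$ the current node. The depth-1 EQC Q-value for moving to unexplored $a\neq t$ is $Q((s,d,e,t),a;(\gamma,\beta)) = d_{ta}\sin(\pi\beta)\sin(\gamma e_{ta})\prod_{k\in\{1,\dots,n\}\setminus\{t,a\}}\cos(\gamma e_{ak})$, and the greedy policy $\pi((s,d,e,t);(\gamma,\beta))$ is a maximizer of this Q-value over unexplored nodes. The policy is called critical at $\gamma_0$ (for a given $\delta>0$) if $\pi((s,d,e,t);(\gamma_0-\delta,\beta))\neq\pi((s,d,e,t);(\gamma_0+\delta,\beta))$. *)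

(* Defs.v *)
From Stdlib Require Import Reals.
From mathcomp Require Import all_boot all_order all_algebra.
From mathcomp Require Import Rstruct.
Set Implicit Arguments. Unset Strict Implicit. Unset Printing Implicit Defensive.
Import Order.TTheory GRing.Theory Num.Theory.
Local Open Scope ring_scope.

Definition scaled_weights (n : nat) (d : 'I_n -> 'I_n -> R) : 'I_n -> 'I_n -> R :=
  fun i j => atan (d i j).

(* A state (s,d,e,t): s i \in {0, PI}, node i unvisited iff s i = PI. *)
Definition unexplored (n : nat) (s : 'I_n -> R) (i : 'I_n) : Prop := s i = PI.

Definition Qval (n : nat) (s : 'I_n -> R) (d e : 'I_n -> 'I_n -> R) (t a : 'I_n)
  (gamma beta : R) : R :=
  d t a * sin (PI * beta) * sin (gamma * e t a) *
  \prod_(k < n | (k != t) && (k != a)) cos (gamma * e a k).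

Definition gfun (n : nat) (d e : 'I_n -> 'I_n -> R) (t a b c : 'I_n)
  (gamma beta : R) : R :=
  d t c * sin (PI * beta) * sin (gamma * e t c) *
  \prod_(k < n | [&& k != t, k != a & k != b]) cos (gamma * e c k).

Definition is_maximizer (n : nat) (s : 'I_n -> R) (d e : 'I_n -> 'I_n -> R)
  (t a : 'I_n) (gamma beta : R) : Prop :=
  unexplored s a /\ a <> t /\
  forall a' : 'I_n, unexplored s a' -> a' <> t ->
    Qval s d e t a' gamma beta <= Qval s d e t a gamma beta.

Definition greedy_policy (n : nat) (s : 'I_n -> R) (d e : 'I_n -> 'I_n -> R)
  (t : 'I_n) (beta : R) (pol : R -> 'I_n) : Prop :=
  forall gamma, is_maximizer s d e t (pol gamma) gamma beta.

(* Main.v *)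
Require Import Defs.
From Stdlib Require Import Reals.
From mathcomp Require Import all_boot all_order all_algebra.
From mathcomp Require Import Rstruct ring lra.
Import Order.TTheory GRing.Theory Num.Theory.
Local Open Scope ring_scope.
Lemma cont_mul (f g : R -> R) x : continuity_pt f x -> continuity_pt g x ->
  continuity_pt (fun y => f y * g y) x.
Proof. move=> hf hg; exact: (continuity_pt_mult f g x hf hg). Qed.

Lemma cont_sub (f g : R -> R) x : continuity_pt f x -> continuity_pt g x ->
  continuity_pt (fun y => f y - g y) x.
Proof. move=> hf hg; exact: (continuity_pt_minus f g x hf hg). Qed.

Lemma cont_cst (c : R) x : continuity_pt (fun _ => c) x.
Proof. by apply: continuity_pt_const => ??. Qed.

Lemma cont_cos w x : continuity_pt (fun g => cos (g * w)) x.
Proof.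
have h : continuity_pt (comp cos (fun g => g * w)) x.
  apply: continuity_pt_comp; last exact: continuity_cos.
  apply: cont_mul; last exact: cont_cst.
  exact: (derivable_continuous_pt _ _ (derivable_pt_id x)).
exact: h.
Qed.

Lemma cont_sin w x : continuity_pt (fun g => sin (g * w)) x.
Proof.
have h : continuity_pt (comp sin (fun g => g * w)) x.
  apply: continuity_pt_comp; last exact: continuity_sin.
  apply: cont_mul; last exact: cont_cst.
  exact: (derivable_continuous_pt _ _ (derivable_pt_id x)).
exact: h.
Qed.

Lemma cont_prod (I : Type) (r : seq I) (P : pred I) (F : I -> R -> R) x :
  (forall k, continuity_pt (F k) x) ->
  continuity_pt (fun g => \prod_(k <- r | P k) F k g) x.
Proof.
move=> hF; elim: r => [|y r IH].
  have -> : (fun g : R => \prod_(k <- [::] | P k) F k g) = (fun _ => 1).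
    by apply: boolp.funext => g; rewrite big_nil.
  exact: cont_cst.
have -> : (fun g : R => \prod_(k <- y :: r | P k) F k g) =
   (fun g => if P y then F y g * \prod_(k <- r | P k) F k g
             else \prod_(k <- r | P k) F k g).
  by apply: boolp.funext => g; rewrite big_cons.
case: (P y) => //; exact: cont_mul.
Qed.

Lemma sg_opp (x y : R) : x * y < 0 -> Num.sg x = - Num.sg y /\ Num.sg y != 0.
Proof.
move=> h.
have [hx|hx|hx] := ltrgtP x 0; have [hy|hy|hy] := ltrgtP y 0;
  rewrite ?(ltr0_sg hx) ?(gtr0_sg hx) ?(ltr0_sg hy) ?(gtr0_sg hy);
  try (split; by rewrite ?opprK //); try nra.
Qed.

Theorem proposition1
  (n : nat) (hn : (4 <= n)%N)
  (d : 'I_n -> 'I_n -> R)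
  (hdpos : forall i j : 'I_n, i != j -> 0 < d i j)
  (hdsym : forall i j : 'I_n, d i j = d j i)
  (beta : R) (hbeta : sin (PI * beta) != 0)
  (s : 'I_n -> R) (hs : forall i, s i = 0 \/ s i = PI)
  (t a b : 'I_n)
  (ha : unexplored s a) (hb : unexplored s b)
  (hab : a != b) (hat : a != t) (hbt : b != t)
  (gs : R) (hgs : 0 < gs)
  (hcos : cos (gs * scaled_weights d a b) = 0)
  (hg : gfun d (scaled_weights d) t a b a gs beta
        != gfun d (scaled_weights d) t a b b gs beta) :
  let e := scaled_weights d in
  let Q := fun c gamma => Qval s d e t c gamma beta in
  exists delta : R, 0 < delta /\
    forall eps : R, 0 < eps < delta ->
      (* (i) *)
      (Num.sg (Q a (gs - eps) - Q b (gs - eps))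
         = - Num.sg (Q a (gs + eps) - Q b (gs + eps))
       /\ Num.sg (Q a (gs + eps) - Q b (gs + eps)) != 0)
      (* (ii) *)
      /\ (forall c : 'I_n, (c = a \/ c = b) ->
            (is_maximizer s d e t c (gs - eps) beta ->
               ~ is_maximizer s d e t c (gs + eps) beta)
            /\ (is_maximizer s d e t c (gs + eps) beta ->
               ~ is_maximizer s d e t c (gs - eps) beta))
      /\ (forall pol : R -> 'I_n, greedy_policy s d e t beta pol ->
            (pol (gs - eps) \in [:: a; b] \/ pol (gs + eps) \in [:: a; b]) ->
            pol (gs - eps) != pol (gs + eps)).
Proof.
move=> e Q.
have hde : forall i j, e i j = e j i by move=> i j; rewrite /e /scaled_weights hdsym.
set w := e a b.
have hw0 : 0 < w.
  have hd : Rlt 0 (d a b) by apply/RltP; exact: hdpos hab.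
  have := atan_increasing _ _ hd; rewrite atan_0 => /RltP; done.
have hw1 : w < PI.
  apply/RltP; have [_ h] := atan_bound (d a b); exact: (Rlt_trans _ _ _ h PI2_Rlt_PI).
have hPI : 0 < PI by apply/RltP; exact: PI_RGT_0.
set ga := fun g => gfun d e t a b a g beta.
set gb := fun g => gfun d e t a b b g beta.
set G := fun g => ga g - gb g.
have hQa : forall g, Q a g = cos (g * w) * ga g.
  move=> g; rewrite /Q /ga /gfun /Qval (bigD1 b) /=; last by rewrite hbt eq_sym hab.
  rewrite (eq_bigl (fun k => [&& k != t, k != a & k != b])); first by rewrite /w mulrCA.
  by move=> k /=; rewrite andbA.
have hQb : forall g, Q b g = cos (g * w) * gb g.
  move=> g; rewrite /Q /gb /gfun /Qval (bigD1 a) /=; last by rewrite hat hab.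
  rewrite (eq_bigl (fun k => [&& k != t, k != a & k != b])); first by rewrite /w /e /scaled_weights (hdsym b a) mulrCA.
  by move=> k /=; case: (k != t); case: (k != a); case: (k != b).
have cG : continuity_pt G gs.
  rewrite /G /ga /gb /gfun; apply: cont_sub; repeat apply: cont_mul;
    try exact: cont_cst; try exact: cont_sin; apply: cont_prod => k; exact: cont_cos.
have hG0 : G gs != 0 by rewrite /G subr_eq0.
have hnG : Rlt 0 `|G gs| by apply/RltP; rewrite normr_gt0.
have [al [hal hal2]] := cG _ hnG.
have {}hal : 0 < al by apply/RltP.
have hsgn : forall u, u != gs -> `|u - gs| < al -> 0 < G u * G gs.
  move=> u hu hua.
  have hD : D_x no_cond gs u by split => // h; rewrite h eqxx in hu.
  have hd1 : Rlt (R_dist u gs) al by rewrite /R_dist RabsE; exact: (elimT RltP hua).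
  have := hal2 u (conj hD hd1); rewrite /= /R_dist RabsE RminusE => /RltP.
  rewrite ltr_norml; move: (G u) (G gs) hG0 => x y hy.
  have [hy'|hy'|hy'] := ltrgtP y 0; last by rewrite hy' eqxx in hy.
    rewrite ltr0_norm // => /andP [h1 h2]; nra.
  rewrite gtr0_norm // => /andP [h1 h2]; nra.
have hc : cos (gs * w) = 0 by exact: hcos.
have hsgs : sin (gs * w) ^+ 2 = 1.
  have := sin2_cos2 (gs * w); rewrite /Rsqr !RealsE.
  rewrite hc expr2; lra.
exists (Num.min al 1); split; first by rewrite lt_min hal ltr01.
move=> eps /andP [he0]; rewrite lt_min => /andP [heal he1].
have hse : 0 < sin (eps * w).
  apply/RltP; apply: sin_gt_0; apply/RltP; first exact: mulr_gt0.
  have : eps * w < w by rewrite -[X in _ < X]mul1r ltr_pM2r.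
  rewrite ?RmultE; lra.
pose gm := gs - eps; pose gp := gs + eps.
have hcm : cos (gm * w) = sin (gs * w) * sin (eps * w).
  rewrite /gm RmultE mulrBl; change (cos (Rminus (gs * w) (eps * w)) = sin (gs * w) * sin (eps * w)).
  by rewrite cos_minus hc Rmult_0_l Rplus_0_l.
have hcp : cos (gp * w) = - (sin (gs * w) * sin (eps * w)).
  rewrite /gp RmultE mulrDl; change (cos (Rplus (gs * w) (eps * w)) = - (sin (gs * w) * sin (eps * w))).
  by rewrite cos_plus hc Rmult_0_l Rminus_0_l.
have hGm : 0 < G (gs - eps) * G gs.
  apply: hsgn; first by rewrite -subr_eq0 addrAC subrr sub0r oppr_eq0 gt_eqF.
  by rewrite addrAC subrr sub0r normrN gtr0_norm.
have hGp : 0 < G (gs + eps) * G gs.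
  apply: hsgn; first by rewrite -subr_eq0 addrAC subrr add0r gt_eqF.
  by rewrite addrAC subrr add0r gtr0_norm.
have hGG : 0 < G (gs - eps) * G (gs + eps).
  have hg2 : 0 < G gs ^+ 2 by rewrite exprn_even_gt0.
  have : 0 < (G (gs - eps) * G (gs + eps)) * G gs ^+ 2.
    have -> : (G (gs - eps) * G (gs + eps)) * G gs ^+ 2 =
      (G (gs - eps) * G gs) * (G (gs + eps) * G gs) by rewrite expr2; ring.
    exact: mulr_gt0.
  by rewrite pmulr_lgt0.
set x := Q a (gs - eps) - Q b (gs - eps).
set y := Q a (gs + eps) - Q b (gs + eps).
have hxy : x * y < 0.
  have -> : x * y = - ((sin (gs * w) * sin (eps * w)) ^+ 2 * (G (gs - eps) * G (gs + eps))).
    rewrite /x /y !hQa !hQb -/gm -/gp hcm hcp /G /ga /gb; rewrite expr2; ring.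
  rewrite oppr_lt0; apply: mulr_gt0 => //.
  rewrite exprMn hsgs mul1r; exact: exprn_gt0.
have hii : forall c : 'I_n, (c = a \/ c = b) ->
            (is_maximizer s d e t c (gs - eps) beta ->
               ~ is_maximizer s d e t c (gs + eps) beta)
            /\ (is_maximizer s d e t c (gs + eps) beta ->
               ~ is_maximizer s d e t c (gs - eps) beta).
  move=> c hcab.
  suff: ~ (is_maximizer s d e t c (gs - eps) beta /\ is_maximizer s d e t c (gs + eps) beta) by tauto.
  move=> [[_ [_ h1]] [_ [_ h2]]].
  have hbt' : b <> t by move=> h; rewrite h eqxx in hbt.
  have hat' : a <> t by move=> h; rewrite h eqxx in hat.
  case: hcab => ->  in h1 h2 *.
    have := h1 b hb hbt'; have := h2 b hb hbt'.
    rewrite /x /y /Q in hxy *; nra.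
  have := h1 a ha hat'; have := h2 a ha hat'.
  rewrite /x /y /Q in hxy *; nra.
split; first exact: sg_opp.
split; first exact: hii.
move=> pol hpol hin; apply/negP => /eqP heq.
have hcab : pol (gs - eps) = a \/ pol (gs - eps) = b.
  by case: hin; rewrite ?heq !inE => /orP [/eqP|/eqP]; auto.
have [h _] := hii _ hcab; apply: h; first exact: hpol.
rewrite heq; exact: hpol.
Qed.
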